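(* Let $p_\tau(\mathbf x)=\sum_{k=1}^K w_k\mathcal N(\mathbf x;\boldsymbol\mu_k,\sigma_\tau^2I_d)$ with $w_k>0$, $\sum w_k=1$, and let $\mathbf J(\mathbf x,\tau)=\nabla\nabla\log p_\tau(\mathbf x)$ be the score Jacobian. Let $\bar{\mathbf x}=\sum_kw_k\boldsymbol\mu_k$, $\boldsymbol\nu_k=\boldsymbol\mu_k-\bar{\mathbf x}$, $\mathbf W=\sum_kw_k\boldsymbol\nu_k\boldsymbol\nu_k^\top$, $\mathbf Q=\sum_kw_k|\boldsymbol\nu_k|^2\boldsymbol\nu_k\boldsymbol\nu_k^\top$ and $\langle d^2\rangle=\sum_kw_k|\boldsymbol\nu_k|^2$. Then as $\sigma_\tau^2\to\infty$, $$\mathbf J(\bar{\mathbf x},\tau)=-\frac{I}{\sigma_\tau^2}+\frac{\mathbf W}{\sigma_\tau^4}+\frac{\langle d^2\rangle\mathbf W-\mathbf Q}{2\sigma_\tau^6}+O(\sigma_\tau^{-8}).$$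
   Context: $\mathcal N(\mathbf x;\boldsymbol\mu,\Sigma)$ is the Gaussian density; $\mathbf W$ is the between-class covariance and $\mathbf Q$ the distance-weighted covariance. *)

(* Defs.v *)
From HB Require Import structures.
From mathcomp Require Import all_boot all_order all_algebra.
From mathcomp Require Import all_classical all_reals all_analysis.
Set Implicit Arguments. Unset Strict Implicit. Unset Printing Implicit Defensive.
Import Order.TTheory GRing.Theory Num.Theory.
Import numFieldNormedType.Exports.
Local Open Scope ring_scope.

Section Defs.
Variables (R : realType) (d K : nat).

Definition sqnorm (v : 'rV[R]_d) : R := \sum_(i < d) (v 0 i) ^+ 2.

Definition gauss (x mu : 'rV[R]_d) (s2 : R) : R :=
  powR (2 * pi * s2) (- (d%:R) / 2) * expR (- sqnorm (x - mu) / (2 * s2)).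

Definition mixture (w : 'I_K -> R) (mu : 'I_K -> 'rV[R]_d) (s2 : R)
  (x : 'rV[R]_d) : R := \sum_(k < K) w k * gauss x (mu k) s2.

Definition ebase (i : 'I_d) : 'rV[R]_d := delta_mx 0 i.

Definition hessian (f : 'rV[R]_d -> R) (x : 'rV[R]_d) : 'M[R]_d :=
  \matrix_(i, j) 'D_(ebase j) (fun y => 'D_(ebase i) f y) x.

Definition score_jacobian (w : 'I_K -> R) (mu : 'I_K -> 'rV[R]_d) (s2 : R)
  (x : 'rV[R]_d) : 'M[R]_d := hessian (fun y => ln (mixture w mu s2 y)) x.

Definition xbar (w : 'I_K -> R) (mu : 'I_K -> 'rV[R]_d) : 'rV[R]_d :=
  \sum_(k < K) w k *: mu k.

Definition nu (w : 'I_K -> R) (mu : 'I_K -> 'rV[R]_d) (k : 'I_K) : 'rV[R]_d :=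
  mu k - xbar w mu.

Definition Wcov (w : 'I_K -> R) (mu : 'I_K -> 'rV[R]_d) : 'M[R]_d :=
  \sum_(k < K) w k *: ((nu w mu k)^T *m nu w mu k).

Definition Qcov (w : 'I_K -> R) (mu : 'I_K -> 'rV[R]_d) : 'M[R]_d :=
  \sum_(k < K) (w k * sqnorm (nu w mu k)) *: ((nu w mu k)^T *m nu w mu k).

Definition avg_d2 (w : 'I_K -> R) (mu : 'I_K -> 'rV[R]_d) : R :=
  \sum_(k < K) w k * sqnorm (nu w mu k).

End Defs.

(* Main.v *)
Require Import Defs.
From HB Require Import structures.
From mathcomp Require Import all_boot all_order all_algebra.
From mathcomp Require Import all_classical all_reals all_analysis.
From mathcomp Require Import ring lra.
Import Order.TTheory GRing.Theory Num.Theory.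
Import numFieldNormedType.Exports.
Local Open Scope ring_scope.
Set Implicit Arguments. Unset Strict Implicit.
Section Ob.
Variable R : realType.
Definition Ob (n : nat) (f : R -> R) :=
  exists C M : R, 1 <= M /\ forall s, M < s -> `|f s| <= C / s ^+ n.

Lemma Ob_ext n f g : (exists M0, forall s, M0 < s -> f s = g s) -> Ob n g -> Ob n f.
Proof.
move=> [M0 e] [C [M [M1 h]]]; exists C, (Num.max M M0); split.
  by rewrite le_max M1.
by move=> s; rewrite gt_max => /andP[a b]; rewrite e // h.
Qed.

Lemma Ob_C0 n f : Ob n f -> exists C M : R, 0 <= C /\ 1 <= M /\ forall s, M < s -> `|f s| <= C / s ^+ n.
Proof.
move=> [C [M [M1 h]]]; exists C, M; split => //.
have s0 : 0 < M + 1 by lra.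
have := h (M + 1) ltac:(lra).
move=> H; have : 0 <= C / (M+1) ^+ n by apply: le_trans H.
by rewrite pmulr_lge0 // invr_gt0 exprn_gt0.
Qed.

Lemma Ob_add n f g : Ob n f -> Ob n g -> Ob n (fun s => f s + g s).
Proof.
move=> [C1 [M1 [h1 e1]]] [C2 [M2 [h2 e2]]]; exists (C1 + C2), (Num.max M1 M2).
split; first by rewrite le_max h1.
move=> s; rewrite gt_max => /andP[a b].
by rewrite (le_trans (ler_normD _ _)) // mulrDl lerD // ?e1 ?e2.
Qed.

Lemma Ob_opp n f : Ob n f -> Ob n (fun s => - f s).
Proof. by move=> [C [M [h e]]]; exists C, M; split => // s /e; rewrite normrN. Qed.

Lemma Ob_sub n f g : Ob n f -> Ob n g -> Ob n (fun s => f s - g s).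
Proof. by move=> a b; apply: Ob_add => //; apply: Ob_opp. Qed.

Lemma Ob_mul m n f g : Ob m f -> Ob n g -> Ob (m + n) (fun s => f s * g s).
Proof.
move=> /Ob_C0 [C1 [M1 [c1 [h1 e1]]]] /Ob_C0 [C2 [M2 [c2 [h2 e2]]]].
exists (C1 * C2), (Num.max M1 M2).
split; first by rewrite le_max h1.
move=> s; rewrite gt_max => /andP[a b].
have s0 : 0 < s by lra.
rewrite normrM exprD invfM mulrACA.
apply: ler_pM => //; [exact: e1|exact: e2].
Qed.

Lemma Ob_cst c : Ob 0 (fun _ => c).
Proof. by exists `|c|, 1; split => // s _; rewrite expr0 invr1 mulr1. Qed.

Lemma Ob_invs : Ob 1 (fun s => s^-1).
Proof.
exists 1, 1; split => // s s1; rewrite expr1 mul1r ger0_norm //.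
by rewrite invr_ge0; lra.
Qed.

Lemma Ob_weak n f : Ob n.+1 f -> Ob n f.
Proof.
move=> /Ob_C0 [C [M [c [h e]]]]; exists C, M; split => // s sM.
have s0 : 0 < s by lra.
apply: (le_trans (e s sM)); rewrite exprS invfM mulrA.
rewrite ler_pM2r ?invr_gt0 ?exprn_gt0 //.
rewrite ler_pdivrMr // ler_peMr //; lra.
Qed.

Lemma Ob_weakn m n f : (m <= n)%N -> Ob n f -> Ob m f.
Proof.
move=> /subnK <-; elim: (n - m)%N => [|k IH] //=.
by rewrite addSn => /Ob_weak.
Qed.

Lemma Ob_scale n c f : Ob n f -> Ob n (fun s => c * f s).
Proof. by move=> h; rewrite -[n]add0n; apply: Ob_mul => //; apply: Ob_cst. Qed.



Lemma Ob_sum n (I : finType) (F : I -> R -> R) :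
  (forall i, Ob n (F i)) -> Ob n (fun s => \sum_(i : I) F i s).
Proof.
move=> h; rewrite /Ob.
pose P := fun (g : R -> R) => Ob n g.
suff : P (\sum_(i : I) F i) by rewrite /P; apply: Ob_ext; exists 0 => s _; rewrite fct_sumE.
apply: (big_ind P).
- exists 0, 1; split => // s _; rewrite normr0 mul0r //.
- by move=> a b; apply: Ob_add.
- by move=> i _; exact: h.
Qed.

Lemma Ob_inv f : (exists M0, forall s, M0 < s -> 1/2 <= f s) -> Ob 0 (fun s => (f s)^-1).
Proof.
move=> [M0 h]; exists 2, (Num.max 1 M0); split; first by rewrite le_max lexx.
move=> s; rewrite gt_max => /andP[_ /h fs].
rewrite expr0 invr1 mulr1 ger0_norm ?invr_ge0; last lra.
rewrite -[2]invrK lef_pV2 ?posrE; lra.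
Qed.

Lemma Ob_pow n : Ob n (fun s => (s ^+ n)^-1).
Proof.
exists 1, 1; split => // s s1; rewrite mul1r ger0_norm //.
by rewrite invr_ge0 exprn_ge0 //; lra.
Qed.

Lemma Ob_mulk k m n f g : (k <= m + n)%N -> Ob m f -> Ob n g -> Ob k (fun s => f s * g s).
Proof. by move=> h a b; exact: (Ob_weakn h (Ob_mul a b)). Qed.

Lemma Ob_eps : Ob 1 (fun s => (2 * s)^-1).
Proof.
apply: Ob_ext (Ob_scale (2^-1 : R) Ob_invs).
by exists 0 => s _; rewrite invfM.
Qed.

Lemma exp_bd (x : R) : 0 <= x -> `|expR (- x) - 1 + x| <= x ^+ 2.
Proof.
move=> x0.
have lo := expR_ge1Dx (- x).
have up : expR (- x) <= 1 - x + x ^+ 2.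
  rewrite expRN.
  have e1 := expR_ge1Dx x.
  have p : 0 < 1 + x by lra.
  apply: (le_trans (y := (1 + x)^-1)); first by rewrite lef_pV2 ?posrE ?expR_gt0.
  rewrite -div1r ler_pdivrMr //; nra.
rewrite ler_norml; apply/andP; split; nra.
Qed.
End Ob.

Unset Implicit Arguments. Set Strict Implicit.
Section D.
Variable R : realType.

Lemma dir_derive (V : normedModType R) (f : V -> R) x v (df : R) :
  is_derive (0:R) 1 (fun h => f (h *: v + x)) df -> is_derive x v f df.
Proof.
case=> d1 d2; split; first by apply/derivable1P.
rewrite -d2 /derive; set g1 := fun h => h^-1 *: _; set g2 := fun h => h^-1 *: _.
suff -> : g1 = g2 by [].
by rewrite funeqE /g1 /g2 => h /=; rewrite addr0 scale0r add0r [_%:A]mulr1.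
Qed.

Lemma poly2_der (b c g : R) :
  is_derive (0:R) 1 (fun t => b + c * t + g * t ^+ 2) c.
Proof.
have h1 : is_derive (0:R) 1 (fun t : R => t) 1 by apply: is_derive_id.
have h2 := is_deriveX 2 h1.
have h3 := is_deriveZ g h2.
have h4 := is_deriveZ c h1.
have h0 : is_derive (0:R) 1 (cst b) 0 by apply: is_derive_cst.
have h5 := is_deriveD h0 h4.
have h6 := is_deriveD h5 h3.
have -> : (fun t => b + c * t + g * t ^+ 2) = (cst b + c \*: id + g \*: id ^+ 2).
  by apply/funext => t /=; rewrite /cst /= !fctE.
apply: is_derive_eq h6 _.
by rewrite add0r expr1 mulr0 scale0r scaler0 addr0 [_%:A]mulr1.
Qed.

Lemma term_der (a b c g u e : R) :
  is_derive (0:R) 1 (fun t => a * expR (b + c * t + g * t ^+ 2) * (u + e * t))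
    (a * expR b * (c * u + e)).
Proof.
pose p := fun t : R => b + c * t + g * t ^+ 2.
have hp := poly2_der b c g.
have he : is_derive (p 0) 1 expR (expR (p 0)) by apply: is_derive_expR.
have hc := is_derive1_comp he hp.
have ha := is_deriveZ a hc.
have h1 : is_derive (0:R) 1 (fun t : R => t) 1 by apply: is_derive_id.
have h0 : is_derive (0:R) 1 (cst u) 0 by apply: is_derive_cst.
have hl := is_deriveD h0 (is_deriveZ e h1).
have hm := is_deriveM ha hl.
have -> : (fun t => a * expR (b + c * t + g * t ^+ 2) * (u + e * t)) =
  ((a \*: (expR \o p)) * (cst u + e \*: id)).
  by apply/funext => t /=; rewrite /cst /= !fctE.
apply: is_derive_eq hm _.
rewrite /p /= !fctE /cst /= !mulr0 expr0n /= mulr0 !addr0 add0r scaler0 addr0.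
rewrite [e%:A]mulr1 /GRing.scale /=; ring.
Qed.

Lemma psi_der (K : nat) (a b c u : 'I_K -> R) (g e : R) :
  is_derive (0:R) 1
    (fun t => \sum_(k < K) a k * expR (b k + c k * t + g * t ^+ 2) * (u k + e * t))
    (\sum_(k < K) a k * expR (b k) * (c k * u k + e)).
Proof.
have := is_derive_sum (fun k => term_der (a k) (b k) (c k) g (u k) e).
rewrite fct_sumE.
by [].
Qed.
End D.

Unset Implicit Arguments. Set Strict Implicit.
Section E.
Variable R : realType.

Lemma sum_pos (K : nat) (F : 'I_K -> R) : (0 < K)%N -> (forall k, 0 < F k) ->
  0 < \sum_(k < K) F k.
Proof.
case: K F => // K F _ h; rewrite big_ord_recl.
apply: (lt_le_trans (h ord0)); rewrite lerDl sumr_ge0 // => k _.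
exact: ltW.
Qed.

Lemma ebaseE d (j i : 'I_d) : ebase R j 0 i = (j == i)%:R :> R.
Proof. by rewrite /ebase mxE eqxx eq_sym. Qed.

Lemma sqnorm_shift d (v : 'rV[R]_d) i t :
  sqnorm (t *: ebase R i + v) = sqnorm v + (2 * v 0 i) * t + t ^+ 2.
Proof.
rewrite /sqnorm.
have -> : \sum_(l < d) ((t *: ebase R i + v) 0 l) ^+ 2 =
   \sum_(l < d) (v 0 l ^+ 2 + (i == l)%:R * (2 * v 0 l * t + t ^+ 2)).
  apply: eq_bigr => l _; rewrite !mxE eqxx /= eq_sym.
  by case: (i == l); rewrite /=; ring.
rewrite big_split /= -addrA; congr (_ + _).
rewrite (bigD1 i) //= eqxx mul1r big1 ?addr0 // => l /negbTE.
by rewrite eq_sym => ->; rewrite mul0r.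
Qed.

Lemma sqnormN d (v : 'rV[R]_d) : sqnorm (- v) = sqnorm v.
Proof. by apply: eq_bigr => l _; rewrite mxE sqrrN. Qed.
End E.

Unset Implicit Arguments. Set Strict Implicit.
Section F.
Variables (R : realType) (d K : nat) (w : 'I_K -> R) (mu : 'I_K -> 'rV[R]_d) (s : R).
Hypotheses (hw : forall k, 0 < w k) (hK : (0 < K)%N) (hs : 0 < s).

Definition cc := powR (2 * pi * s) (- (d%:R) / 2).
Definition EE (y : 'rV[R]_d) k := expR (- sqnorm (y - mu k) / (2 * s)).
Definition F1 i (y : 'rV[R]_d) :=
  (\sum_(k < K) w k * cc * EE y k * (- (2 * (y - mu k) 0 i) / (2 * s))) /
  (\sum_(k < K) w k * cc * EE y k).

Lemma cc_gt0 : 0 < cc.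
Proof. by apply: powR_gt0; rewrite !mulr_gt0 // pi_gt0. Qed.

Lemma expo_shift (v : 'rV[R]_d) i t :
  - sqnorm (t *: ebase R i + v) / (2 * s) =
  - sqnorm v / (2 * s) + (- (2 * v 0 i) / (2 * s)) * t + (- 1 / (2 * s)) * t ^+ 2.
Proof.
rewrite sqnorm_shift; field.
by rewrite gt_eqF.
Qed.

Lemma D1 i y : 'D_(ebase R i) (fun y => ln (mixture w mu s y)) y = F1 i y.
Proof.
suff h : is_derive y (ebase R i) (fun y => ln (mixture w mu s y)) (F1 i y).
  by case: h.
apply: dir_derive.
pose a k := w k * cc.
pose b k := - sqnorm (y - mu k) / (2 * s).
pose c k := - (2 * (y - mu k) 0 i) / (2 * s).
pose g := - 1 / (2 * s).
pose psi := fun t => \sum_(k < K) a k * expR (b k + c k * t + g * t ^+ 2) * (1 + 0 * t).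
have -> : (fun h => ln (mixture w mu s (h *: ebase R i + y))) = (@ln R) \o psi.
  apply/funext => t /=; congr ln; apply: eq_bigr => k _.
  rewrite /gauss /a /b /c /g mul0r addr0 mulr1 mulrA -addrA expo_shift.
  by [].
have p0 : 0 < psi 0.
  apply: sum_pos => // k; rewrite mul0r addr0 mulr1.
  by rewrite mulr_gt0 ?expR_gt0 // mulr_gt0 // cc_gt0.
have hl : is_derive (psi 0) 1 (@ln R) (psi 0)^-1 by apply: is_derive1_ln.
have hh : is_derive (0:R) 1 ((@ln R) \o psi) ((psi 0)^-1 * (\sum_(k < K) a k * expR (b k) * (c k * 1 + 0))).
  exact: (is_derive1_comp hl (@psi_der R K a b c (fun _ => 1) g 0)).
apply: (is_derive_eq hh).
rewrite /F1 mulrC; congr (_ * _).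
  apply: eq_bigr => k _; rewrite /a /b /c /EE mulr1 addr0 //.
congr (_^-1); apply: eq_bigr => k _.
by rewrite /a /b /c /g /EE !mulr0 expr0n /= mulr0 !addr0 mulr1.
Qed.

Definition H2 i j (x0 : 'rV[R]_d) :=
  (\sum_(k < K) w k * cc * EE x0 k *
      ((- (2 * (x0 - mu k) 0 j) / (2 * s)) * (- (2 * (x0 - mu k) 0 i) / (2 * s))
       + (- (2 * (j == i)%:R) / (2 * s)))) / (\sum_(k < K) w k * cc * EE x0 k)
  - (\sum_(k < K) w k * cc * EE x0 k * (- (2 * (x0 - mu k) 0 i) / (2 * s))) *
    (\sum_(k < K) w k * cc * EE x0 k * (- (2 * (x0 - mu k) 0 j) / (2 * s))) /
    (\sum_(k < K) w k * cc * EE x0 k) ^+ 2.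

Lemma D2 i j x0 : 'D_(ebase R j) (F1 i) x0 = H2 i j x0.
Proof.
suff h : is_derive x0 (ebase R j) (F1 i) (H2 i j x0) by case: h.
apply: dir_derive.
pose a k := w k * cc.
pose b k := - sqnorm (x0 - mu k) / (2 * s).
pose c k := - (2 * (x0 - mu k) 0 j) / (2 * s).
pose g := - 1 / (2 * s).
pose u k := - (2 * (x0 - mu k) 0 i) / (2 * s).
pose e := - (2 * (j == i)%:R) / (2 * s).
pose N := fun t => \sum_(k < K) a k * expR (b k + c k * t + g * t ^+ 2) * (u k + e * t).
pose D := fun t => \sum_(k < K) a k * expR (b k + c k * t + g * t ^+ 2) * ((fun _ => 1) k + 0 * t).
have -> : (fun h => F1 i (h *: ebase R j + x0)) = N * (fun t => (D t)^-1).
  apply/funext => t /=; rewrite /F1 /N /D /=; congr (_ * _).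
    apply: eq_bigr => k _; rewrite /a /b /c /g /u /e /EE -addrA expo_shift; congr (_ * _).
    rewrite !mxE eqxx /= eq_sym; move: ((j == i)%:R) => z; field; by rewrite gt_eqF.
  congr GRing.inv; apply: eq_bigr => k _.
  by rewrite /a /b /c /g /EE -addrA expo_shift mul0r addr0 mulr1.
have D0 : 0 < D 0.
  apply: sum_pos => // k; rewrite mul0r addr0 mulr1.
  by rewrite mulr_gt0 ?expR_gt0 // mulr_gt0 // cc_gt0.
have hD := @psi_der R K a b c (fun _ => 1) g 0.
have hN := @psi_der R K a b c u g e.
have hV := is_deriveV (lt0r_neq0 D0) hD.
have hM := is_deriveM hN hV.
apply: (is_derive_eq hM).
have eN : \sum_(k < K) a k * expR (b k + c k * 0 + g * 0 ^+ 2) * (u k + e * 0) =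
   \sum_(k < K) w k * cc * EE x0 k * u k.
  by apply: eq_bigr => k _; rewrite !mulr0 expr0n /= mulr0 !addr0.
have eD : D 0 = \sum_(k < K) w k * cc * EE x0 k.
  by apply: eq_bigr => k _; rewrite !mulr0 expr0n /= mulr0 !addr0 mulr1.
have eDp : \sum_(k < K) a k * expR (b k) * (c k * 1 + 0) =
   \sum_(k < K) w k * cc * EE x0 k * c k.
  by apply: eq_bigr => k _; rewrite mulr1 addr0.
have eNp : \sum_(k < K) a k * expR (b k) * (c k * u k + e) =
   \sum_(k < K) w k * cc * EE x0 k * (c k * u k + e).
  by [].
have D0' := D0; rewrite eD in D0'.
rewrite eN eDp eNp eD /H2 /GRing.scale /=.
rewrite /u /c /e.
move: D0'; set S := \sum_(k < K) w k * cc * EE x0 k => D0'.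
set P := \sum_(k < K) _ * (_ * _ + _).
set A := \sum_(k < K) w k * cc * EE x0 k * (- (2 * (x0 - mu k) 0 i) / (2 * s)).
set B := \sum_(k < K) w k * cc * EE x0 k * (- (2 * (x0 - mu k) 0 j) / (2 * s)).
field; by rewrite gt_eqF.
Qed.

Lemma hess_val i j x0 : score_jacobian w mu s x0 i j = H2 i j x0.
Proof.
rewrite /score_jacobian /hessian mxE.
have -> : (fun y => 'D_(ebase R i) (fun y0 => ln (mixture w mu s y0)) y) = F1 i.
  by apply/funext => y; rewrite D1.
exact: D2.
Qed.
End F.

Unset Implicit Arguments. Set Strict Implicit.
Set Implicit Arguments. Unset Strict Implicit.
Section G.
Variables (R : realType) (d K : nat) (w : 'I_K -> R) (mu : 'I_K -> 'rV[R]_d).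
Hypotheses (hw : forall k, 0 < w k) (hsum : \sum_(k < K) w k = 1).

Definition nv k := nu w mu k.
Definition aa k := sqnorm (nv k).
Definition Ek (s : R) k := expR (- aa k / (2 * s)).
Definition SS s := \sum_(k < K) w k * Ek s k.
Definition PP i j s := \sum_(k < K) w k * Ek s k * (nv k 0 i * nv k 0 j).
Definition MM i s := \sum_(k < K) w k * Ek s k * nv k 0 i.

Lemma xbar_mu k : xbar w mu - mu k = - nv k.
Proof. by rewrite /nv /nu opprB. Qed.

Lemma EE_xbar s k : EE R d K mu s (xbar w mu) k = Ek s k.
Proof. by rewrite /EE /Ek xbar_mu sqnormN. Qed.

Lemma H2_form s i j : 0 < s ->
  H2 R d K w mu s i j (xbar w mu) =
  (PP i j s / SS s - MM i s * MM j s / SS s ^+ 2) / s ^+ 2 - (i == j)%:R / s.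
Proof.
move=> hs.
have c0 := @cc_gt0 R d s hs.
have hK : (0 < K)%N.
  rewrite lt0n; apply/negP => /eqP K0.
  have F : forall k : 'I_K, False by move=> [k hk]; rewrite K0 in hk.
  by move: hsum; rewrite big1 => [/eqP|k]; [rewrite eq_sym oner_eq0 | case: (F k)].
have S0 : 0 < SS s.
  by apply: sum_pos => // k; rewrite mulr_gt0 ?expR_gt0.
rewrite /H2.
have e1 : \sum_(k < K) w k * cc R d s * EE R d K mu s (xbar w mu) k *
      (- (2 * (xbar w mu - mu k) 0 j) / (2 * s) * (- (2 * (xbar w mu - mu k) 0 i) / (2 * s)) +
       - (2 * (j == i)%:R) / (2 * s)) =
    cc R d s / s ^+ 2 * PP i j s - cc R d s * (i == j)%:R / s * SS s.
  rewrite /PP /SS !mulr_sumr -sumrB; apply: eq_bigr => k _.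
  rewrite EE_xbar !xbar_mu !mxE eq_sym.
  move: ((i == j)%:R) => z; field; by rewrite gt_eqF.
have e2 : \sum_(k < K) w k * cc R d s * EE R d K mu s (xbar w mu) k = cc R d s * SS s.
  rewrite /SS !mulr_sumr; apply: eq_bigr => k _; rewrite EE_xbar; ring.
have e3 : forall i, \sum_(k < K) w k * cc R d s * EE R d K mu s (xbar w mu) k *
      (- (2 * (xbar w mu - mu k) 0 i) / (2 * s)) = cc R d s / s * MM i s.
  move=> l; rewrite /MM !mulr_sumr; apply: eq_bigr => k _.
  rewrite EE_xbar !xbar_mu !mxE; field; by rewrite gt_eqF.
rewrite e1 e2 !e3.
move: S0; set S := SS s => S0.
field.
by rewrite ?gt_eqF.
Qed.

Lemma hK : (0 < K)%N.
Proof.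
rewrite lt0n; apply/negP => /eqP K0.
have F : forall k : 'I_K, False by move=> [k hk]; rewrite K0 in hk.
by move: hsum; rewrite big1 => [/eqP|k]; [rewrite eq_sym oner_eq0 | case: (F k)].
Qed.

Lemma Wcov_E i j : Wcov w mu i j = \sum_(k < K) w k * (nv k 0 i * nv k 0 j).
Proof.
rewrite /Wcov summxE; apply: eq_bigr => k _.
by rewrite mxE !mxE big_ord1 !mxE.
Qed.

Lemma Qcov_E i j : Qcov w mu i j = \sum_(k < K) w k * aa k * (nv k 0 i * nv k 0 j).
Proof.
rewrite /Qcov summxE; apply: eq_bigr => k _.
by rewrite mxE !mxE big_ord1 !mxE.
Qed.

Lemma sum_nv i : \sum_(k < K) w k * nv k 0 i = 0.
Proof.
rewrite /nv /nu.
have -> : \sum_(k < K) w k * (mu k - xbar w mu) 0 i =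
  \sum_(k < K) w k * mu k 0 i - (\sum_(k < K) w k) * xbar w mu 0 i.
  by rewrite mulr_suml -sumrB; apply: eq_bigr => k _; rewrite !mxE mulrBr.
rewrite hsum mul1r /xbar summxE; apply/eqP; rewrite subr_eq0; apply/eqP; apply: eq_bigr => k _.
by rewrite !mxE.
Qed.

Definition dd := avg_d2 w mu.
Definition dl s k := Ek s k - 1 + aa k / (2 * s).
Definition YY s := \sum_(k < K) w k * dl s k.
Definition XX i j s := \sum_(k < K) (w k * (nv k 0 i * nv k 0 j)) * dl s k.
Definition YI i s := \sum_(k < K) (w k * nv k 0 i) * dl s k.
Definition ZZ i := \sum_(k < K) w k * aa k * nv k 0 i.

Lemma SS_rep s : SS s = 1 - (2 * s)^-1 * dd + YY s.
Proof.
transitivity (\sum_(k < K) w k - (2 * s)^-1 * dd + YY s); last by rewrite hsum.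
rewrite /SS /YY /dd /avg_d2 mulr_sumr -sumrB -big_split /=.
apply: eq_bigr => k _; rewrite /dl /nv /aa; ring.
Qed.

Lemma PP_rep i j s : PP i j s = Wcov w mu i j - (2 * s)^-1 * Qcov w mu i j + XX i j s.
Proof.
rewrite /PP /XX Wcov_E Qcov_E mulr_sumr -sumrB -big_split /=.
apply: eq_bigr => k _; rewrite /dl /nv /aa; ring.
Qed.

Lemma MM_rep i s : MM i s = - ((2 * s)^-1 * ZZ i) + YI i s.
Proof.
rewrite -[RHS]add0r -(sum_nv i) /MM /YI /ZZ mulr_sumr -sumrN -!big_split /=.
apply: eq_bigr => k _; rewrite /dl /nv /aa; ring.
Qed.

Lemma aa_ge0 k : 0 <= aa k.
Proof. by rewrite /aa /sqnorm sumr_ge0 // => l _; rewrite sqr_ge0. Qed.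

Lemma dd_ge0 : 0 <= dd.
Proof. by rewrite /dd /avg_d2 sumr_ge0 // => k _; rewrite mulr_ge0 ?aa_ge0 // ltW. Qed.

Lemma dl_Ob k : Ob 2 (fun s => dl s k).
Proof.
exists (aa k ^+ 2 / 4), 1; split => // s s1.
have s0 : 0 < s by lra.
have x0 : 0 <= aa k / (2 * s) by rewrite divr_ge0 ?aa_ge0 // mulr_ge0 //; lra.
have := exp_bd x0; rewrite /dl /Ek mulNr.
move/le_trans; apply.
rewrite expr_div_n exprMn (_ : aa k ^+ 2 / (2 ^+ 2 * s ^+ 2) = aa k ^+ 2 / 4 / s ^+ 2) //.
field; by rewrite gt_eqF.
Qed.

Lemma YY_Ob : Ob 2 YY.
Proof.
apply: Ob_ext (Ob_sum (fun k => Ob_scale (w k) (dl_Ob k))).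
by exists 0 => s _.
Qed.

Lemma XX_Ob i j : Ob 2 (XX i j).
Proof.
apply: Ob_ext (Ob_sum (fun k => Ob_scale (w k * (nv k 0 i * nv k 0 j)) (dl_Ob k))).
by exists 0 => s _.
Qed.

Lemma YI_Ob i : Ob 2 (YI i).
Proof.
apply: Ob_ext (Ob_sum (fun k => Ob_scale (w k * nv k 0 i) (dl_Ob k))).
by exists 0 => s _.
Qed.

Lemma MM_Ob i : Ob 1 (MM i).
Proof.
have h1 : Ob 1 (fun s => (2 * s)^-1 * ZZ i) := Ob_mulk (m:=1) (n:=0) (leqnn 1) (@Ob_eps R) (Ob_cst (ZZ i)).
apply: Ob_ext (Ob_add (Ob_opp h1) (Ob_weak (YI_Ob i))).
by exists 0 => s _; rewrite MM_rep.
Qed.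

Lemma SS_half : exists M0, forall s, M0 < s -> 1/2 <= SS s.
Proof.
exists (dd + 1) => s sM.
have s0 : 0 < s by have := dd_ge0; lra.
have h : 1 - (2 * s)^-1 * dd <= SS s.
  rewrite /SS.
  have -> : 1 - (2 * s)^-1 * dd = \sum_(k < K) w k * (1 - aa k / (2 * s)).
    rewrite -{1}hsum /dd /avg_d2 mulr_sumr -sumrB; apply: eq_bigr => k _.
    rewrite /aa /nv; field; by rewrite gt_eqF.
  apply: ler_sum => k _; rewrite ler_pM2l // /Ek mulNr.
  exact: expR_ge1Dx.
apply: le_trans h.
have : (2 * s)^-1 * dd <= 1/2.
  rewrite mulrC ler_pdivrMr ?mulr_gt0 //; have := dd_ge0; nra.
lra.
Qed.
End G.

Unset Implicit Arguments. Set Strict Implicit.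
Section Z.
Variables (R : realType) (d K : nat) (w : 'I_K -> R) (mu : 'I_K -> 'rV[R]_d).
Hypotheses (hw : forall k, 0 < w k) (hsum : \sum_(k < K) w k = 1).

Definition target s i j :=
  ((- s^-1) *: (1%:M : 'M[R]_d)
            + (s ^+ 2)^-1 *: Wcov w mu
            + (2 * s ^+ 3)^-1 *: (avg_d2 w mu *: Wcov w mu - Qcov w mu)) i j.

Lemma entry_Ob i j :
  Ob 4 (fun s => score_jacobian w mu s (xbar w mu) i j - target s i j).
Proof.
pose W := Wcov w mu i j.
pose Q := Qcov w mu i j.
pose D := dd w mu.
pose eps := fun s : R => (2 * s)^-1.
have he : Ob 1 eps := @Ob_eps R.
have hY := YY_Ob w mu.
have hX := XX_Ob w mu i j.
have hA : Ob 2 (fun s => XX w mu i j s - YY w mu s * W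
     + (eps s * eps s) * (D * (D * W - Q)) - (eps s * YY w mu s) * (D * W - Q)).
  apply: Ob_sub; first apply: Ob_add; first apply: Ob_sub.
  - exact: hX.
  - exact: (Ob_mulk (m:=2) (n:=0) (leqnn 2) hY (Ob_cst W)).
  - exact: (Ob_mulk (m:=2) (n:=0) (leqnn 2) (Ob_mul he he) (Ob_cst _)).
  - exact: (Ob_mulk (m:=3) (n:=0) (leqnSn 2) (Ob_mul he hY) (Ob_cst _)).
have hS : Ob 0 (fun s => (SS w mu s)^-1) := Ob_inv (SS_half mu hw hsum).
have hB : Ob 2 (fun s => (XX w mu i j s - YY w mu s * W
     + (eps s * eps s) * (D * (D * W - Q)) - (eps s * YY w mu s) * (D * W - Q))
     * (SS w mu s)^-1 - (MM w mu i s * MM w mu j s) * ((SS w mu s)^-1 * (SS w mu s)^-1)).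
  apply: Ob_sub.
  - exact: (Ob_mulk (m:=2) (n:=0) (leqnn 2) hA hS).
  - exact: (Ob_mulk (m:=2) (n:=0) (leqnn 2) (Ob_mul (MM_Ob mu hsum i) (MM_Ob mu hsum j)) (Ob_mul hS hS)).
have hF := Ob_mul (@Ob_pow R 2) hB.
apply: Ob_ext hF.
have [M0 hM0] := SS_half mu hw hsum.
exists (Num.max M0 0) => s; rewrite gt_max => /andP[sM s0].
have S0 : 0 < SS w mu s by have := hM0 _ sM; lra.
rewrite hess_val // ?(hK hsum) // (H2_form mu hw hsum) //.
rewrite /target !mxE.
rewrite -[avg_d2 w mu]/(dd w mu) -/D -/W -/Q PP_rep -/W -/Q.
rewrite (SS_rep mu hsum) in S0 *.
rewrite /eps.
set X := XX w mu i j s; set Y := YY w mu s.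
set Mi := MM w mu i s; set Mj := MM w mu j s.
rewrite -/D in S0 *; move: ((i == j)%:R) => z.
field.
have h : 2 * s - D + Y * (2 * s) = (2 * s) * (1 - (2 * s)^-1 * D + Y).
  by field; rewrite gt_eqF.
by rewrite h gt_eqF //= mulf_neq0 // gt_eqF // mulr_gt0.
Qed.
End Z.

Lemma Ob_unif (R : realType) (I : finType) n (f : I -> R -> R) :
  (forall x, Ob n (f x)) ->
  exists C M : R, forall s, M < s -> forall x, `|f x s| <= C / s ^+ n.
Proof.
move=> hf.
have h' : forall x, exists CM : R * R, 0 <= CM.1 /\ 1 <= CM.2 /\
    forall s, CM.2 < s -> `|f x s| <= CM.1 / s ^+ n.
  by move=> x; have [C [M [c [m h]]]] := Ob_C0 (hf x); exists (C, M).
have [g hg] := boolp.choice h'.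
exists (\sum_x (g x).1), (\sum_x (g x).2) => s sM x.
have [c1 [m1 h1]] := hg x.
have le1 : forall (F : I -> R), (forall y, 0 <= F y) -> F x <= \sum_y F y.
  move=> F F0; rewrite (bigD1 x) //= lerDl sumr_ge0 // => y _; exact: F0.
have g2 : forall y, 0 <= (g y).2 by move=> y; have [_ [m _]] := hg y; lra.
have g1 : forall y, 0 <= (g y).1 by move=> y; have [c _] := hg y.
have Mx := le1 _ g2.
have s0 : 0 < s by lra.
apply: (le_trans (h1 s ltac:(lra))).
by rewrite ler_pM2r ?invr_gt0 ?exprn_gt0 // le1.
Qed.

Theorem mainTheorem19 (R : realType) (d K : nat)
  (w : 'I_K -> R) (mu : 'I_K -> 'rV[R]_d) :
  (forall k, 0 < w k) -> \sum_(k < K) w k = 1 ->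
  exists C M : R, forall s2 : R, M < s2 ->
    forall i j : 'I_d,
      `| score_jacobian w mu s2 (xbar w mu) i j
         - ((- s2^-1) *: (1%:M : 'M[R]_d)
            + (s2 ^+ 2)^-1 *: Wcov w mu
            + (2 * s2 ^+ 3)^-1 *: (avg_d2 w mu *: Wcov w mu - Qcov w mu)) i j |
      <= C / s2 ^+ 4.
Proof.
move=> hw hsum.
have := @Ob_unif R ('I_d * 'I_d)%type 4
  (fun ij s => score_jacobian w mu s (xbar w mu) ij.1 ij.2 - @target R d K w mu s ij.1 ij.2).
case=> [[i j]|C [M h]]; first exact: entry_Ob.
by exists C, M => s sM i j; exact: (h s sM (i, j)).
Qed.

Unset Implicit Arguments. Set Strict Implicit.
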